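(* Let $M$ be a mode for a program $P_1$, and assume that $P_1$ is safe w.r.t. $M$ and $P_1$ satisfies $M$. Let $C_1: H\leftarrow G_1,G_2,t_1\neq t_2,G_3$ be a clause in $P_1$, and let $P_2$ be the program derived from $P_1$ by replacing $C_1$ by the clause $C_2: H\leftarrow G_1,t_1\neq t_2,G_2,G_3$. Then (i) $P_2$ is safe w.r.t. $M$, (ii) $P_2$ satisfies $M$, and (iii) for each non-basic atom $A$ which satisfies $M$, $A$ succeeds in $P_1$ iff $A$ succeeds in $P_2$.
   Context: Syntax. Predicate symbols $\mathit{true}$, $=$, $\neq$ are basic, all others non-basic; function symbols form an infinite set. Basic atoms: $\mathit{true}$, $t_1=t_2$, $t_1\neq t_2$ (disequation); non-basic atoms: $p(t_1,\dots,t_m)$ with $p$ non-basic. A goal is a conjunction of atoms ('','' associative, neutral element $\mathit{true}$). A clause $C$ is $A\leftarrow G$ with non-basic head $hd(C)=A$ and body $bd(C)=G$; a program is a set of clauses. All mgu's are relevant and idempotent. A variable $X$ is a local variable of goal $G$ in clause $H\leftarrow G_1,G,G_2$ iff $X\in vars(G)-vars(H,G_1,G_2)$. Operational semantics (for program $P$): (1) $(t_1=t_2,G)\longmapsto_P G\vartheta$ if $t_1,t_2$ unify with mgu $\vartheta$; (2) $(t_1\neq t_2,G)\longmapsto_P G$ if $t_1,t_2$ are not unifiable; (3) $(A,G)\longmapsto_P(bd(C),G)\vartheta$ if $A$ is non-basic, $C$ is a renamed apart (fresh variables) clause of $P$ and $\vartheta$ is an mgu of $A$ and $hd(C)$. A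 goal $G_0$ succeeds in $P$ iff $G_0\longmapsto_P\cdots\longmapsto_P\mathit{true}$. $\longmapsto^*_P$ is the reflexive-transitive closure. Modes. A mode for a non-basic predicate $p$ of arity $h$ is $p(m_1,\dots,m_h)$, $m_i\in\{+,?\}$; argument $t_i$ of $p(t_1,\dots,t_h)$ is an input argument iff $m_i=+$, and variables in input arguments are input variables of the atom. A mode for a program is a set containing exactly one mode for each non-basic predicate occurring in it. An atom satisfies $M$ iff $M$ has a mode for its predicate and its input arguments are ground. A program $P$ satisfies $M$ iff for every non-basic atom $A_0$ satisfying $M$ and every non-basic atom $A$ and goal $G$ with $A_0\longmapsto^*_P(A,G)$, $A$ satisfies $M$. A clause $C$ is safe w.r.t. $M$ iff every variable of every disequation $t_1\neq t_2$ in $bd(C)$ is an input variable of $hd(C)$ or a local variable of $t_1\neq t_2$ in $C$; a program is safe iff all its clauses are. *)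

(* Defs.v *)
From Stdlib Require Import List.
Import ListNotations.

Inductive term : Type :=
| Var : nat -> term
| Fn  : nat -> list term -> term.

(** The basic atom [true] is the neutral element of ",", so it is
    represented by the empty goal [[]] rather than by an atom constructor.
    [APred p ts] is the non-basic atom p(ts); a predicate symbol is
    identified by its name together with its arity. *)
Inductive atom : Type :=
| AEq   : term -> term -> atom
| ANeq  : term -> term -> atom
| APred : nat -> list term -> atom.

Definition goal := list atom.

Record clause := mkClause { cpred : nat; cargs : list term; cbody : goal }.

Definition program := clause -> Prop.

Fixpoint tvars (t : term) : list nat :=
  match t with
  | Var x => [x]
  | Fn _ ts => flat_map tvars ts
  end.

Definition tsvars (ts : list term) : list nat := flat_map tvars ts.

Definition avars (a : atom) : list nat :=
  match a with
  | AEq t1 t2 => tvars t1 ++ tvars t2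
  | ANeq t1 t2 => tvars t1 ++ tvars t2
  | APred _ ts => tsvars ts
  end.

Definition gvars (g : goal) : list nat := flat_map avars g.

Definition clause_vars (C : clause) : list nat := tsvars (cargs C) ++ gvars (cbody C).

Definition subst := nat -> term.

Fixpoint tsubst (s : subst) (t : term) : term :=
  match t with
  | Var x => s x
  | Fn f ts => Fn f (map (tsubst s) ts)
  end.

Definition asubst (s : subst) (a : atom) : atom :=
  match a with
  | AEq t1 t2 => AEq (tsubst s t1) (tsubst s t2)
  | ANeq t1 t2 => ANeq (tsubst s t1) (tsubst s t2)
  | APred p ts => APred p (map (tsubst s) ts)
  end.

Definition gsubst (s : subst) (g : goal) : goal := map (asubst s) g.

Definition unifier (s : subst) (ts us : list term) : Prop :=
  map (tsubst s) ts = map (tsubst s) us.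

Definition unifiable (ts us : list term) : Prop := exists s, unifier s ts us.

Definition relevant_idempotent_mgu (th : subst) (ts us : list term) : Prop :=
  unifier th ts us /\
  (forall s, unifier s ts us -> exists d, forall x, s x = tsubst d (th x)) /\
  (forall x, tsubst th (th x) = th x) /\
  (forall x, th x <> Var x ->
     In x (tsvars ts ++ tsvars us) /\
     forall y, In y (tvars (th x)) -> In y (tsvars ts ++ tsvars us)).

Definition renaming := nat -> nat.
Definition injective_ren (r : renaming) : Prop := forall x y, r x = r y -> x = y.
Definition ren_subst (r : renaming) : subst := fun x => Var (r x).
Definition rename_clause (r : renaming) (C : clause) : clause :=
  mkClause (cpred C) (map (tsubst (ren_subst r)) (cargs C))
           (gsubst (ren_subst r) (cbody C)).

(** One step of the operational semantics for program [P]
    (leftmost atom selected). *)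
Inductive step (P : program) : goal -> goal -> Prop :=
| step_eq : forall t1 t2 G th,
    relevant_idempotent_mgu th [t1] [t2] ->
    step P (AEq t1 t2 :: G) (gsubst th G)
| step_neq : forall t1 t2 G,
    ~ unifiable [t1] [t2] ->
    step P (ANeq t1 t2 :: G) G
| step_res : forall p ts G C r th,
    P C -> injective_ren r ->
    (forall x, In x (clause_vars (rename_clause r C)) ->
               ~ In x (gvars (APred p ts :: G))) ->
    cpred C = p ->
    relevant_idempotent_mgu th ts (cargs (rename_clause r C)) ->
    step P (APred p ts :: G) (gsubst th (cbody (rename_clause r C) ++ G)).

Inductive steps (P : program) : goal -> goal -> Prop :=
| steps_refl : forall G, steps P G G
| steps_trans : forall G1 G2 G3, step P G1 G2 -> steps P G2 G3 -> steps P G1 G3.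

Definition succeeds (P : program) (G : goal) : Prop := steps P G [].

(** Modes: a (partial) assignment to each predicate symbol (name, arity)
    of a list of flags, [true] meaning "+" (input) and [false] meaning "?". *)
Definition mode := (nat * nat) -> option (list bool).

Definition occurs (q : nat * nat) (P : program) : Prop :=
  exists C, P C /\
    ((cpred C, length (cargs C)) = q \/
     exists p ts, In (APred p ts) (cbody C) /\ (p, length ts) = q).

Definition is_mode_for (M : mode) (P : program) : Prop :=
  forall q, match M q with
            | Some ms => length ms = snd q /\ occurs q P
            | None => ~ occurs q P
            end.

Definition ground (t : term) : Prop := tvars t = [].

Definition atom_sat (M : mode) (p : nat) (ts : list term) : Prop :=
  exists ms, M (p, length ts) = Some ms /\
    forall i t, nth_error ms i = Some true -> nth_error ts i = Some t -> ground t.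

Definition input_var (M : mode) (p : nat) (ts : list term) (x : nat) : Prop :=
  exists ms i t, M (p, length ts) = Some ms /\ nth_error ms i = Some true /\
    nth_error ts i = Some t /\ In x (tvars t).

Definition prog_satisfies (P : program) (M : mode) : Prop :=
  forall p0 ts0, atom_sat M p0 ts0 ->
  forall p ts G, steps P [APred p0 ts0] (APred p ts :: G) -> atom_sat M p ts.

Definition clause_safe (M : mode) (C : clause) : Prop :=
  forall G1 t1 t2 G2, cbody C = G1 ++ ANeq t1 t2 :: G2 ->
  forall x, In x (tvars t1 ++ tvars t2) ->
    input_var M (cpred C) (cargs C) x \/
    ~ In x (tsvars (cargs C) ++ gvars G1 ++ gvars G2).

Definition prog_safe (M : mode) (P : program) : Prop :=
  forall C, P C -> clause_safe M C.

Definition replace_clause (P : program) (C1 C2 : clause) : program :=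
  fun C => (P C /\ C <> C1) \/ C = C2.

(* Main.v *)
Require Import Defs.
From Stdlib Require Import List Arith Lia Permutation Classical.
Import ListNotations.

Fixpoint term_ind2 (P : term -> Prop) (HV : forall x, P (Var x))
  (HF : forall f ts, Forall P ts -> P (Fn f ts)) (t : term) : P t :=
  match t with
  | Var x => HV x
  | Fn f ts => HF f ts ((fix go (l : list term) : Forall P l :=
                 match l with
                 | [] => Forall_nil _
                 | t' :: l' => Forall_cons _ (term_ind2 P HV HF t') (go l')
                 end) ts)
  end.

Lemma tsubst_ext : forall s1 s2 t, (forall x, In x (tvars t) -> s1 x = s2 x) ->
  tsubst s1 t = tsubst s2 t.
Proof.
  intros s1 s2 t; induction t using term_ind2; simpl; intros Hx.
  - apply Hx; simpl; auto.
  - f_equal. apply map_ext_in. intros a Ha.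
    rewrite Forall_forall in H. apply H; auto.
    intros x Hxa; apply Hx. apply in_flat_map. eauto.
Qed.

Lemma tvars_tsubst : forall s t y, In y (tvars (tsubst s t)) <->
  exists x, In x (tvars t) /\ In y (tvars (s x)).
Proof.
  intros s t; induction t using term_ind2; simpl; intros y.
  - split; [intros; exists x; auto | intros [z [[<-|[]] Hz]]; auto].
  - rewrite flat_map_concat_map, map_map, <- flat_map_concat_map.
    rewrite in_flat_map. split.
    + intros [a [Ha Hy]]. rewrite Forall_forall in H. apply H in Hy; auto.
      destruct Hy as [x [Hx1 Hx2]]. exists x; split; auto. apply in_flat_map; eauto.
    + intros [x [Hx1 Hx2]]. apply in_flat_map in Hx1. destruct Hx1 as [a [Ha Hxa]].
      exists a; split; auto. rewrite Forall_forall in H. apply H; eauto.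
Qed.

Lemma tsubst_comp : forall s1 s2 t,
  tsubst s2 (tsubst s1 t) = tsubst (fun x => tsubst s2 (s1 x)) t.
Proof.
  intros s1 s2 t; induction t using term_ind2; simpl; auto.
  f_equal. rewrite map_map. apply map_ext_in. intros a Ha.
  rewrite Forall_forall in H; auto.
Qed.

Lemma tsubst_var : forall t, tsubst Var t = t.
Proof.
  intros t; induction t using term_ind2; simpl; auto.
  f_equal. rewrite <- (map_id ts) at 2. apply map_ext_in. intros a Ha.
  rewrite Forall_forall in H; auto.
Qed.

Lemma tsubst_id : forall s t, (forall x, In x (tvars t) -> s x = Var x) -> tsubst s t = t.
Proof.
  intros s t H. rewrite (tsubst_ext s Var t H). apply tsubst_var.
Qed.

Lemma tsubst_ground : forall s t, tvars t = [] -> tsubst s t = t.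
Proof.
  intros s t H. apply tsubst_id. rewrite H. intros x [].
Qed.

Lemma tsvars_map : forall s ts y, In y (tsvars (map (tsubst s) ts)) <->
  exists x, In x (tsvars ts) /\ In y (tvars (s x)).
Proof.
  intros s ts y. unfold tsvars. rewrite flat_map_concat_map, map_map, <- flat_map_concat_map.
  rewrite in_flat_map. split.
  - intros [a [Ha Hy]]. apply tvars_tsubst in Hy. destruct Hy as [x [H1 H2]].
    exists x; split; auto. apply in_flat_map; eauto.
  - intros [x [H1 H2]]. apply in_flat_map in H1. destruct H1 as [a [Ha Hxa]].
    exists a; split; auto. apply tvars_tsubst; eauto.
Qed.

Lemma avars_asubst : forall s a y, In y (avars (asubst s a)) <->
  exists x, In x (avars a) /\ In y (tvars (s x)).
Proof.
  intros s [t1 t2|t1 t2|p ts] y; simpl;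
   try (rewrite !in_app_iff, !tvars_tsubst; split;
     [intros [[x [? ?]]|[x [? ?]]]; exists x; rewrite in_app_iff; auto
     | intros [x [Hx ?]]; rewrite in_app_iff in Hx; destruct Hx; [left|right]; eauto]).
  apply tsvars_map.
Qed.

Lemma gvars_app : forall G1 G2, gvars (G1 ++ G2) = gvars G1 ++ gvars G2.
Proof. intros; unfold gvars; apply flat_map_app. Qed.

Lemma gvars_cons : forall a G, gvars (a :: G) = avars a ++ gvars G.
Proof. reflexivity. Qed.

Lemma gvars_gsubst : forall s G y, In y (gvars (gsubst s G)) <->
  exists x, In x (gvars G) /\ In y (tvars (s x)).
Proof.
  intros s G y. unfold gvars, gsubst. rewrite flat_map_concat_map, map_map, <- flat_map_concat_map.
  rewrite in_flat_map. split.
  - intros [a [Ha Hy]]. apply avars_asubst in Hy. destruct Hy as [x [H1 H2]].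
    exists x; split; auto. apply in_flat_map; eauto.
  - intros [x [H1 H2]]. apply in_flat_map in H1. destruct H1 as [a [Ha Hxa]].
    exists a; split; auto. apply avars_asubst; eauto.
Qed.

Lemma tsmap_ext : forall s1 s2 ts, (forall x, In x (tsvars ts) -> s1 x = s2 x) ->
  map (tsubst s1) ts = map (tsubst s2) ts.
Proof.
  intros. apply map_ext_in. intros a Ha. apply tsubst_ext. intros x Hx; apply H.
  apply in_flat_map; eauto.
Qed.

Lemma asubst_ext : forall s1 s2 a, (forall x, In x (avars a) -> s1 x = s2 x) ->
  asubst s1 a = asubst s2 a.
Proof.
  intros s1 s2 [t1 t2|t1 t2|p ts] H; simpl in *;
    try (f_equal; apply tsubst_ext; intros; apply H; rewrite in_app_iff; auto).
  f_equal. apply tsmap_ext; auto.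
Qed.

Lemma gsubst_ext : forall s1 s2 G, (forall x, In x (gvars G) -> s1 x = s2 x) ->
  gsubst s1 G = gsubst s2 G.
Proof.
  intros. apply map_ext_in. intros a Ha. apply asubst_ext. intros x Hx; apply H.
  apply in_flat_map; eauto.
Qed.

Lemma asubst_var : forall a, asubst Var a = a.
Proof. intros [t1 t2|t1 t2|p ts]; simpl; rewrite ?tsubst_var; auto.
  f_equal. rewrite <- (map_id ts) at 2. apply map_ext. apply tsubst_var. Qed.

Lemma asubst_id : forall s a, (forall x, In x (avars a) -> s x = Var x) -> asubst s a = a.
Proof. intros. rewrite (asubst_ext s Var a H). apply asubst_var. Qed.

Lemma gsubst_id : forall s G, (forall x, In x (gvars G) -> s x = Var x) -> gsubst s G = G.
Proof. intros. rewrite (gsubst_ext s Var G H). unfold gsubst.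
  rewrite <- (map_id G) at 2. apply map_ext. apply asubst_var. Qed.

Lemma asubst_comp : forall s1 s2 a,
  asubst s2 (asubst s1 a) = asubst (fun x => tsubst s2 (s1 x)) a.
Proof. intros s1 s2 [t1 t2|t1 t2|p ts]; simpl; rewrite ?tsubst_comp; auto.
  f_equal. rewrite map_map. apply map_ext. intros; apply tsubst_comp. Qed.

Lemma gsubst_comp : forall s1 s2 G,
  gsubst s2 (gsubst s1 G) = gsubst (fun x => tsubst s2 (s1 x)) G.
Proof. intros. unfold gsubst. rewrite map_map. apply map_ext. intros; apply asubst_comp. Qed.

Lemma gsubst_app : forall s G1 G2, gsubst s (G1 ++ G2) = gsubst s G1 ++ gsubst s G2.
Proof. intros; apply map_app. Qed.

Definition foot (th : subst) (U : list nat) :=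
  forall x, th x <> Var x -> In x U /\ incl (tvars (th x)) U.

Lemma foot_vars : forall th U x y, foot th U -> In y (tvars (th x)) -> y = x \/ In y U.
Proof.
  intros th U x y Hf Hy.
  destruct (th x) eqn:E.
  - destruct (Nat.eq_dec n x) as [->|Hne].
    + simpl in Hy. destruct Hy as [<-|[]]; auto.
    + right. assert (th x <> Var x) by (rewrite E; congruence).
      apply Hf in H. destruct H as [_ Hi]. apply Hi. rewrite E; auto.
  - right. assert (th x <> Var x) by (rewrite E; congruence).
    apply Hf in H. destruct H as [_ Hi]. apply Hi. rewrite E; auto.
Qed.

Lemma foot_fix : forall th U x, foot th U -> ~ In x U -> th x = Var x.
Proof.
  intros th U x Hf Hx. destruct (th x) eqn:E.
  - destruct (Nat.eq_dec n x) as [->|Hne]; auto.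
    exfalso. apply Hx. apply Hf. rewrite E; congruence.
  - exfalso. apply Hx. apply Hf. rewrite E; congruence.
Qed.

Lemma mgu_foot : forall th ts us, relevant_idempotent_mgu th ts us ->
  foot th (tsvars ts ++ tsvars us).
Proof.
  intros th ts us [_ [_ [_ H]]] x Hx. destruct (H x Hx); split; auto.
Qed.

Definition disjoint (l1 l2 : list nat) := forall x, In x l1 -> In x l2 -> False.

Lemma avars_subst_foot : forall th U a y, foot th U -> In y (avars (asubst th a)) ->
  In y (avars a) \/ In y U.
Proof.
  intros th U a y Hf Hy. apply avars_asubst in Hy. destruct Hy as [x [Hx Hy]].
  destruct (foot_vars _ _ _ _ Hf Hy) as [->|]; auto.
Qed.

Lemma gvars_subst_foot : forall th U G y, foot th U -> In y (gvars (gsubst th G)) ->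
  In y (gvars G) \/ In y U.
Proof.
  intros th U G y Hf Hy. apply gvars_gsubst in Hy. destruct Hy as [x [Hx Hy]].
  destruct (foot_vars _ _ _ _ Hf Hy) as [->|]; auto.
Qed.

Lemma asubst_foot_id : forall th U a, foot th U -> disjoint (avars a) U -> asubst th a = a.
Proof.
  intros. apply asubst_id. intros x Hx. apply (foot_fix _ U); auto.
  intro; eapply H0; eauto.
Qed.

Section Rel.
Variable okp : atom -> Prop.
Variable okt : atom -> atom -> Prop.

Inductive R : list nat -> goal -> goal -> Prop :=
| R_nil Pre : R Pre [] []
| R_cons Pre a G H : R (Pre ++ avars a) G H -> R Pre (a :: G) (a :: H)
| R_pend Pre p G H : okp p -> R (Pre ++ avars p) G H -> R Pre G (p :: H)
| R_track Pre D D' Gm G H : okt D D' -> disjoint (avars D) (Pre ++ gvars Gm) ->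
    R (Pre ++ gvars Gm ++ avars D ++ avars D') G H ->
    R Pre (D :: Gm ++ G) (Gm ++ D' :: H).

Lemma R_anti : forall Pre G H, R Pre G H -> forall Pre', incl Pre' Pre -> R Pre' G H.
Proof.
  induction 1 as [Pre|Pre a G H HR IHR|Pre p G H Hp0 HR IHR|Pre D D' Gm G H Hok Hdis HR IHR]; intros Pre' Hi.
  - constructor.
  - constructor. apply IHR. intros x; rewrite !in_app_iff; intuition.
  - constructor; auto. apply IHR. intros x; rewrite !in_app_iff; intuition.
  - constructor; auto.
    + intros x Y1 Y2. apply (Hdis x Y1). rewrite in_app_iff in *. intuition.
    + apply IHR. intros x; rewrite !in_app_iff; intuition.
Qed.

Lemma R_enlarge : forall Pre G H, R Pre G H -> forall X, disjoint X (gvars G) ->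
  R (Pre ++ X) G H.
Proof.
  induction 1 as [Pre|Pre a G H HR IHR|Pre p G H Hp0 HR IHR|Pre D D' Gm G H Hok Hdis HR IHR]; intros X HX.
  - constructor.
  - constructor. apply R_anti with ((Pre ++ avars a) ++ X).
    + apply IHR. intros x Y1 Y2. apply (HX x Y1). simpl. rewrite in_app_iff; auto.
    + intros x; rewrite !in_app_iff; intuition.
  - constructor; auto. apply R_anti with ((Pre ++ avars p) ++ X).
    + apply IHR. auto.
    + intros x; rewrite !in_app_iff; intuition.
  - constructor; auto.
    + intros x Y1 Y2. rewrite !in_app_iff in Y2. destruct Y2 as [[Y2|Y2]|Y2].
      * apply (Hdis x Y1); rewrite in_app_iff; auto.
      * apply (HX x Y2). simpl. rewrite in_app_iff; auto.
      * apply (Hdis x Y1); rewrite in_app_iff; auto.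
    + apply R_anti with ((Pre ++ gvars Gm ++ avars D ++ avars D') ++ X).
      * apply IHR. intros x Y1 Y2. apply (HX x Y1). simpl. rewrite gvars_app, !in_app_iff; auto.
      * intros x; rewrite !in_app_iff; intuition.
Qed.

Lemma R_prepend : forall K Pre G H, R (Pre ++ gvars K) G H -> R Pre (K ++ G) (K ++ H).
Proof.
  induction K; intros Pre G H HR; simpl.
  - apply R_anti with (Pre ++ []); auto. intros x; rewrite in_app_iff; auto.
  - constructor. apply IHK. rewrite <- app_assoc. exact HR.
Qed.

Lemma R_subst : forall th U,
  foot th U ->
  (forall p, okp p -> okp (asubst th p)) ->
  (forall D D', okt D D' -> disjoint (avars D) U -> okt (asubst th D) (asubst th D')) ->
  forall Pre G H, R Pre G H ->
  (forall x, In x U -> In x Pre \/ ~ In x (gvars G ++ gvars H)) ->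
  forall Q, incl Q (Pre ++ U) -> R Q (gsubst th G) (gsubst th H).
Proof.
  intros th U Hf Hp Ht. induction 1 as [Pre|Pre a G H HR IHR|Pre p G H Hp0 HR IHR|Pre D D' Gm G H Hok Hdis HR IHR]; intros HU Q HQ.
  - constructor.
  - simpl. constructor. apply IHR.
    + intros x Hx. destruct (HU x Hx) as [Y1|Y1]; [left; rewrite in_app_iff; auto|].
      destruct (in_dec Nat.eq_dec x (avars a)); [left; rewrite in_app_iff; auto|right].
      intro Y2; apply Y1. simpl. rewrite !in_app_iff in *. tauto.
    + intros x; rewrite !in_app_iff. intros [Hx|Hx].
      * apply HQ in Hx. rewrite in_app_iff in Hx; tauto.
      * destruct (avars_subst_foot _ _ _ _ Hf Hx); tauto.
  - simpl. constructor; auto. apply IHR.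
    + intros x Hx. destruct (HU x Hx) as [Y1|Y1]; [left; rewrite in_app_iff; auto|].
      destruct (in_dec Nat.eq_dec x (avars p)); [left; rewrite in_app_iff; auto|right].
      intro Y2; apply Y1. simpl. rewrite !in_app_iff in *. tauto.
    + intros x; rewrite !in_app_iff. intros [Hx|Hx].
      * apply HQ in Hx. rewrite in_app_iff in Hx; tauto.
      * destruct (avars_subst_foot _ _ _ _ Hf Hx); tauto.
  - assert (HDU : disjoint (avars D) U).
    { intros x Y1 Y2. destruct (HU x Y2) as [Y3|Y3].
      - apply (Hdis x Y1). rewrite in_app_iff; auto.
      - apply Y3. simpl. rewrite !in_app_iff; auto. }
    assert (HDfix : asubst th D = D) by (eapply asubst_foot_id; eauto).
    unfold gsubst. simpl. rewrite !map_app. simpl. fold (gsubst th Gm) (gsubst th G) (gsubst th H).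
    pose proof (Ht _ _ Hok HDU) as Hok2. rewrite HDfix in *.
    constructor; auto.
    + intros x Y1 Y2. rewrite in_app_iff in Y2. destruct Y2 as [Y2|Y2].
      * apply HQ in Y2. rewrite in_app_iff in Y2. destruct Y2 as [Y2|Y2].
        -- apply (Hdis x Y1). rewrite in_app_iff; auto.
        -- apply (HDU x Y1 Y2).
      * destruct (gvars_subst_foot _ _ _ _ Hf Y2) as [Y3|Y3].
        -- apply (Hdis x Y1). rewrite in_app_iff; auto.
        -- apply (HDU x Y1 Y3).
    + apply IHR.
      * intros x Hx. destruct (HU x Hx) as [Y1|Y1]; [left; rewrite in_app_iff; auto|].
        destruct (in_dec Nat.eq_dec x (gvars Gm ++ avars D ++ avars D')) as [i|n];
          [left; rewrite in_app_iff; auto|right].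
        intro Y2; apply Y1. simpl. rewrite !gvars_app, !gvars_cons, !in_app_iff in *. tauto.
      * intros x; rewrite !in_app_iff. intros [Hx|[Hx|[Hx|Hx]]].
        -- apply HQ in Hx. rewrite in_app_iff in Hx; tauto.
        -- destruct (gvars_subst_foot _ _ _ _ Hf Hx); tauto.
        -- tauto.
        -- destruct (avars_subst_foot _ _ _ _ Hf Hx); tauto.
Qed.

Lemma R_nilH : forall Pre G H, R Pre G H -> H = [] -> G = [].
Proof.
  induction 1 as [Pre|Pre a G H HR IHR|Pre p G H Hp0 HR IHR|Pre D D' Gm G H Hok Hdis HR IHR]; intros E; try discriminate; auto.
  destruct Gm; discriminate.
Qed.

Lemma R_vars_GH : (forall D D', okt D D' -> incl (avars D) (avars D')) ->
  forall Pre G H, R Pre G H -> incl (gvars G) (gvars H).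
Proof.
  intros Hok0. induction 1 as [Pre|Pre a G H HR IHR|Pre p G H Hp0 HR IHR|Pre D D' Gm G H Hok Hdis HR IHR];
    intros x Hx; simpl in *; rewrite ?gvars_app, ?gvars_cons, ?in_app_iff in *.
  - exact Hx.
  - destruct Hx; auto.
  - right; auto.
  - apply Hok0 in Hok. destruct Hx as [Hx|[Hx|Hx]]; auto.
Qed.

Lemma R_vars_HG : forall B, (forall p, okp p -> forall x, In x (avars p) -> B <= x) ->
  (forall D D', okt D D' -> forall x, In x (avars D') -> B <= x) ->
  forall Pre G H, R Pre G H -> forall x, In x (gvars H) -> In x (gvars G) \/ B <= x.
Proof.
  intros B Hp Ht. induction 1 as [Pre|Pre a G H HR IHR|Pre p G H Hp0 HR IHR|Pre D D' Gm G H Hok Hdis HR IHR];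
    intros x Hx; simpl in *; rewrite ?gvars_app, ?gvars_cons, ?in_app_iff in *.
  - auto.
  - destruct Hx as [Hx|Hx]; auto. destruct (IHR x Hx); auto.
  - destruct Hx as [Hx|Hx]; eauto.
  - destruct Hx as [Hx|[Hx|Hx]]; auto.
    + right; eauto.
    + destruct (IHR x Hx); auto.
Qed.

Lemma R_res_gen : forall th U X Pre0 G H,
  foot th U ->
  (forall p, okp p -> okp (asubst th p)) ->
  (forall D D', okt D D' -> disjoint (avars D) U -> okt (asubst th D) (asubst th D')) ->
  R Pre0 G H -> disjoint X (gvars G) -> incl U (Pre0 ++ X) ->
  forall Q, incl Q ((Pre0 ++ X) ++ U) -> R Q (gsubst th G) (gsubst th H).
Proof.
  intros th U X Pre0 G H Hf Hp Ht HR Hd HU Q HQ.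
  apply (R_subst th U Hf Hp Ht (Pre0 ++ X) G H).
  - apply R_enlarge; auto.
  - intros x Hx; left; auto.
  - exact HQ.
Qed.

Lemma incl_subst_foot : forall th U K Y, foot th U -> incl (gvars K) Y ->
  incl (gvars (gsubst th K)) (Y ++ U).
Proof.
  intros th U K Y Hf HK x Hx. apply in_app_iff.
  destruct (gvars_subst_foot _ _ _ _ Hf Hx); auto.
Qed.

Lemma incl_asubst_foot : forall th U a Y, foot th U -> incl (avars a) Y ->
  incl (avars (asubst th a)) (Y ++ U).
Proof.
  intros th U a Y Hf HK x Hx. apply in_app_iff.
  destruct (avars_subst_foot _ _ _ _ Hf Hx); auto.
Qed.

Lemma R_res_simple : forall th U X Pre0 G H K,
  foot th U ->
  (forall p, okp p -> okp (asubst th p)) ->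
  (forall D D', okt D D' -> disjoint (avars D) U -> okt (asubst th D) (asubst th D')) ->
  R Pre0 G H -> disjoint X (gvars G) -> incl U (Pre0 ++ X) -> incl (gvars K) X ->
  R [] (gsubst th (K ++ G)) (gsubst th (K ++ H)).
Proof.
  intros th U X Pre0 G H K Hf Hp Ht HR Hd HU HK.
  rewrite !gsubst_app. apply R_prepend. eapply R_res_gen; eauto.
  intros x Hx. simpl in Hx. apply (incl_subst_foot _ _ _ _ Hf HK) in Hx.
  rewrite !in_app_iff in *; tauto.
Qed.

Lemma R_res_track : forall th U X Pre0 G H K1 K2 K3 Da Db,
  foot th U ->
  (forall p, okp p -> okp (asubst th p)) ->
  (forall D D', okt D D' -> disjoint (avars D) U -> okt (asubst th D) (asubst th D')) ->
  R Pre0 G H -> disjoint X (gvars G) -> incl U (Pre0 ++ X) ->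
  incl (gvars K1 ++ gvars K2 ++ gvars K3 ++ avars Da ++ avars Db) X ->
  okt (asubst th Da) (asubst th Db) ->
  disjoint (avars (asubst th Da)) (gvars (gsubst th K1) ++ gvars (gsubst th K2)) ->
  R [] (gsubst th (K1 ++ Da :: K2 ++ K3 ++ G)) (gsubst th (K1 ++ K2 ++ Db :: K3 ++ H)).
Proof.
  intros th U X Pre0 G H K1 K2 K3 Da Db Hf Hp Ht HR Hd HU HK Hok Hdis.
  unfold gsubst. rewrite !map_app. cbn [map]. rewrite !map_app.
  fold (gsubst th K1) (gsubst th K2) (gsubst th K3) (gsubst th G) (gsubst th H).
  apply R_prepend. apply R_track; auto.
  - apply R_prepend. eapply R_res_gen; eauto.
    assert (I1 : incl (gvars K1) X) by (intros x Hx; apply HK; rewrite !in_app_iff; auto).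
    assert (I2 : incl (gvars K2) X) by (intros x Hx; apply HK; rewrite !in_app_iff; auto).
    assert (I3 : incl (gvars K3) X) by (intros x Hx; apply HK; rewrite !in_app_iff; auto).
    assert (I4 : incl (avars Da) X) by (intros x Hx; apply HK; rewrite !in_app_iff; auto).
    assert (I5 : incl (avars Db) X) by (intros x Hx; apply HK; rewrite !in_app_iff; auto).
    apply (incl_subst_foot _ _ _ _ Hf) in I1, I2, I3.
    apply (incl_asubst_foot _ _ _ _ Hf) in I4, I5.
    intros x Hx. simpl in Hx. rewrite !in_app_iff in Hx.
    destruct Hx as [[Hx|[Hx|[Hx|Hx]]]|Hx];
      [apply I1 in Hx|apply I2 in Hx|apply I4 in Hx|apply I5 in Hx|apply I3 in Hx];
      rewrite !in_app_iff in *; tauto.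
Qed.

End Rel.

Lemma steps_app : forall P a b c, steps P a b -> steps P b c -> steps P a c.
Proof. intros P a b c H; induction H; intros; auto. econstructor; eauto. Qed.

Lemma steps_snoc : forall P a b c, steps P a b -> step P b c -> steps P a c.
Proof. intros. eapply steps_app; eauto. econstructor; eauto. constructor. Qed.

Lemma steps_one : forall P a b, step P a b -> steps P a b.
Proof. intros. econstructor; eauto. constructor. Qed.

Lemma nonunif_subst : forall s u v, ~ unifiable [u] [v] ->
  ~ unifiable [tsubst s u] [tsubst s v].
Proof.
  intros s u v Hn [s' Hs]. apply Hn. exists (fun x => tsubst s' (s x)).
  unfold unifier in *; simpl in *. inversion Hs. rewrite !tsubst_comp in H0. congruence.
Qed.

Lemma clause_vars_rename : forall r C y, In y (clause_vars (rename_clause r C)) <->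
  exists x, In x (clause_vars C) /\ y = r x.
Proof.
  intros r C y. unfold clause_vars, rename_clause; simpl. rewrite in_app_iff.
  rewrite tsvars_map, gvars_gsubst. split.
  - intros [[x [H1 H2]]|[x [H1 H2]]]; simpl in H2; destruct H2 as [<-|[]];
      exists x; rewrite in_app_iff; auto.
  - intros [x [H1 ->]]. rewrite in_app_iff in H1. destruct H1; [left|right];
      exists x; simpl; auto.
Qed.

Lemma future_neq : forall P H H', steps P H H' -> H' = [] ->
  forall Hp u v Hq, H = Hp ++ ANeq u v :: Hq ->
  disjoint (tvars u ++ tvars v) (gvars Hp) -> ~ unifiable [u] [v].
Proof.
  intros P H H' Hs. induction Hs as [G|G1 G2 G3 Hst Hs IH]; intros E Hp u v Hq EH Hd.
  - subst. destruct Hp; discriminate.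
  - destruct Hp as [|a Hp'].
    + simpl in EH. subst. inversion Hst; subst. auto.
    + simpl in EH. subst. inversion Hst; subst.
      *
        match goal with Hm : relevant_idempotent_mgu _ _ _ |- _ => apply mgu_foot in Hm; rename Hm into Hf end.
        assert (Hfix : asubst th (ANeq u v) = ANeq u v).
        { eapply asubst_foot_id; eauto. intros x Y1 Y2. apply (Hd x Y1).
          simpl. unfold tsvars in Y2; simpl in Y2. rewrite !app_nil_r in Y2.
          rewrite !in_app_iff in *; tauto. }
        apply (IH eq_refl (gsubst th Hp') u v (gsubst th Hq)).
        { unfold gsubst. rewrite map_app. cbn [map]. rewrite Hfix. reflexivity. }
        intros x Y1 Y2. destruct (gvars_subst_foot _ _ _ _ Hf Y2) as [Y4|Y4];
          apply (Hd x Y1); simpl; rewrite !in_app_iff; auto.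
        unfold tsvars in Y4; simpl in Y4. rewrite !app_nil_r, in_app_iff in Y4. tauto.
      * eapply IH; eauto. intros x Y1 Y2. apply (Hd x Y1). simpl. rewrite in_app_iff; auto.
      *
        match goal with Hm : relevant_idempotent_mgu _ _ _ |- _ => apply mgu_foot in Hm; rename Hm into Hf end.
        match goal with Hm : forall x, In x (clause_vars _) -> _ |- _ => rename Hm into Hfr end.
        assert (Hdis : disjoint (tvars u ++ tvars v)
                  (tsvars ts ++ tsvars (cargs (rename_clause r C)))).
        { intros x Y1 Y2. rewrite in_app_iff in Y2. destruct Y2 as [Y2|Y2].
          - apply (Hd x Y1). simpl. rewrite in_app_iff; auto.
          - apply (Hfr x); [unfold clause_vars; rewrite in_app_iff; auto|].
            rewrite gvars_cons, gvars_app, gvars_cons. simpl avars. rewrite !in_app_iff in *; tauto. }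
        assert (Hfix : asubst th (ANeq u v) = ANeq u v) by (eapply asubst_foot_id; eauto).
        apply (IH eq_refl (gsubst th (cbody (rename_clause r C) ++ Hp')) u v (gsubst th Hq)).
        { unfold gsubst. rewrite !map_app. cbn [map]. rewrite Hfix, app_assoc. reflexivity. }
        intros x Y1 Y2. rewrite gsubst_app, gvars_app, in_app_iff in Y2.
        destruct Y2 as [Y2|Y2];
          destruct (gvars_subst_foot _ _ _ _ Hf Y2) as [Y4|Y4]; try solve [apply (Hdis x Y1 Y4)].
        -- apply (Hfr x); [unfold clause_vars; rewrite in_app_iff; auto|].
           rewrite gvars_cons, gvars_app, gvars_cons. simpl avars. rewrite !in_app_iff in *; tauto.
        -- apply (Hd x Y1). rewrite gvars_cons, in_app_iff; auto.
Qed.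

Definition below (B : nat) (l : list nat) := forall x, In x l -> x < B.

Inductive bstep (P : program) (B : nat) : goal -> goal -> Prop :=
| bstep_eq : forall t1 t2 G th,
    below B (gvars (AEq t1 t2 :: G)) ->
    relevant_idempotent_mgu th [t1] [t2] ->
    bstep P B (AEq t1 t2 :: G) (gsubst th G)
| bstep_neq : forall t1 t2 G,
    below B (gvars (ANeq t1 t2 :: G)) ->
    ~ unifiable [t1] [t2] ->
    bstep P B (ANeq t1 t2 :: G) G
| bstep_res : forall p ts G C r th,
    below B (gvars (APred p ts :: G)) ->
    below B (clause_vars (rename_clause r C)) ->
    P C -> injective_ren r ->
    (forall x, In x (clause_vars (rename_clause r C)) ->
               ~ In x (gvars (APred p ts :: G))) ->
    cpred C = p ->
    relevant_idempotent_mgu th ts (cargs (rename_clause r C)) ->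
    bstep P B (APred p ts :: G) (gsubst th (cbody (rename_clause r C) ++ G)).

Inductive bsteps (P : program) (B : nat) : goal -> goal -> Prop :=
| bsteps_refl : forall G, bsteps P B G G
| bsteps_trans : forall G1 G2 G3, bstep P B G1 G2 -> bsteps P B G2 G3 -> bsteps P B G1 G3.

Lemma list_bound : forall l : list nat, exists b, below b l.
Proof.
  induction l as [|a l [b Hb]].
  - exists 0. intros x [].
  - exists (S (max a b)). intros x [<-|Hx]; [lia|]. apply Hb in Hx. lia.
Qed.

Lemma below_mono : forall B B' l, below B l -> B <= B' -> below B' l.
Proof. intros B B' l H Hle x Hx. apply H in Hx. lia. Qed.

Lemma bstep_mono : forall P B B' G G', bstep P B G G' -> B <= B' -> bstep P B' G G'.
Proof.
  intros. destruct H; [constructor 1|constructor 2|econstructor 3]; eauto using below_mono.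
Qed.

Lemma bsteps_mono : forall P B B' G G', bsteps P B G G' -> B <= B' -> bsteps P B' G G'.
Proof.
  intros P B B' G G' H Hle. induction H; [constructor|econstructor; eauto using bstep_mono].
Qed.

Lemma step_bstep : forall P G G', step P G G' -> exists B, bstep P B G G'.
Proof.
  intros P G G' H. destruct H.
  - destruct (list_bound (gvars (AEq t1 t2 :: G))) as [b Hb]. exists b. constructor; auto.
  - destruct (list_bound (gvars (ANeq t1 t2 :: G))) as [b Hb]. exists b. constructor; auto.
  - destruct (list_bound (gvars (APred p ts :: G) ++ clause_vars (rename_clause r C))) as [b Hb].
    exists b. econstructor; eauto; intros x Hx; apply Hb; rewrite in_app_iff; auto.
Qed.

Lemma steps_bsteps : forall P G G', steps P G G' -> exists B, bsteps P B G G'.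
Proof.
  intros P G G' H. induction H.
  - exists 0. constructor.
  - destruct IHsteps as [B1 HB1]. destruct (step_bstep _ _ _ H) as [B2 HB2].
    exists (max B1 B2). econstructor.
    + eapply bstep_mono; eauto. lia.
    + eapply bsteps_mono; eauto. lia.
Qed.

Lemma bstep_step : forall P B G G', bstep P B G G' -> step P G G'.
Proof. intros. destruct H; econstructor; eauto. Qed.

Lemma input_ground : forall M p ts hargs r th x,
  atom_sat M p ts ->
  unifier th ts (map (tsubst (ren_subst r)) hargs) ->
  input_var M p hargs x -> tvars (th (r x)) = [].
Proof.
  intros M p ts hargs r th x [ms [HM Hg]] Hu [ms' [i [t [HM' [Hi [Hn Hx]]]]]].
  unfold unifier in Hu.
  assert (Hlen : length ts = length hargs).
  { apply (f_equal (@length _)) in Hu. rewrite !length_map in Hu. auto. }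
  rewrite <- Hlen in HM'. rewrite HM in HM'. injection HM' as <-.
  assert (Hi2 : i < length ts) by (rewrite Hlen; apply nth_error_Some; congruence).
  destruct (nth_error ts i) as [t'|] eqn:Et; [|apply nth_error_None in Et; lia].
  pose proof (Hg i t' Hi Et) as Hgr.
  assert (E : tsubst th t' = tsubst th (tsubst (ren_subst r) t)).
  { apply (f_equal (fun l => nth_error l i)) in Hu.
    rewrite !nth_error_map, Et, Hn in Hu. simpl in Hu. congruence. }
  rewrite tsubst_ground in E by auto.
  destruct (tvars (th (r x))) as [|y l] eqn:Ey; auto. exfalso.
  assert (Hy : In y (tvars (tsubst th (tsubst (ren_subst r) t)))).
  { apply tvars_tsubst. exists (r x). split.
    - apply tvars_tsubst. exists x. split; auto. simpl; auto.
    - rewrite Ey; simpl; auto. }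
  rewrite <- E in Hy. unfold ground in Hgr. rewrite Hgr in Hy. destruct Hy.
Qed.

Section Main.
Variable M : mode.
Variable P1 : program.
Variable p : nat.
Variable hargs : list term.
Variables G1 G2 G3 : goal.
Variables t1 t2 : term.
Hypothesis Hsafe : prog_safe M P1.
Hypothesis HC1 : P1 (mkClause p hargs (G1 ++ G2 ++ ANeq t1 t2 :: G3)).

Definition DD := ANeq t1 t2.
Definition C1 := mkClause p hargs (G1 ++ G2 ++ ANeq t1 t2 :: G3).
Definition C2 := mkClause p hargs (G1 ++ ANeq t1 t2 :: G2 ++ G3).
Definition P2 := replace_clause P1 C1 C2.
Definition VV := tsvars hargs ++ gvars G1 ++ gvars G2 ++ gvars G3.

Lemma cv_C1 : forall x, In x (clause_vars C1) <-> In x VV \/ In x (avars DD).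
Proof.
  intros x. unfold clause_vars, C1, VV, DD; cbn [cargs cbody].
  repeat rewrite ?gvars_app, ?gvars_cons, ?in_app_iff. tauto.
Qed.

Lemma cv_C2 : forall x, In x (clause_vars C2) <-> In x VV \/ In x (avars DD).
Proof.
  intros x. unfold clause_vars, C2, VV, DD; cbn [cargs cbody].
  repeat rewrite ?gvars_app, ?gvars_cons, ?in_app_iff. tauto.
Qed.

Lemma safety_D : forall x, In x (avars DD) -> In x VV -> input_var M p hargs x.
Proof.
  intros x H1 H2. pose proof (Hsafe _ HC1) as Hs.
  destruct (Hs (G1 ++ G2) t1 t2 G3) with (x := x) as [|Hn]; auto.
  - simpl. rewrite app_assoc. reflexivity.
  - exfalso. apply Hn. unfold VV in H2. rewrite gvars_app. simpl. rewrite !in_app_iff in *. tauto.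
Qed.

Section Head.
Variable r : renaming.
Variable ts : list term.
Variable th : subst.
Hypothesis Hr : injective_ren r.
Hypothesis Hfr : forall x, In x (clause_vars C1) -> ~ In (r x) (tsvars ts).
Hypothesis Hmgu : relevant_idempotent_mgu th ts (map (tsubst (ren_subst r)) hargs).
Hypothesis Hsat : atom_sat M p ts.

Definition UU := tsvars ts ++ tsvars (map (tsubst (ren_subst r)) hargs).

Lemma hfoot : foot th UU.
Proof. apply mgu_foot; auto. Qed.

Lemma local_notU : forall x, In x (avars DD) -> ~ In x VV -> ~ In (r x) UU.
Proof.
  intros x H1 H2 H3. unfold UU in H3. rewrite in_app_iff in H3. destruct H3 as [H3|H3].
  - apply (Hfr x); auto. apply cv_C1; auto.
  - apply tsvars_map in H3. destruct H3 as [z [Hz1 Hz2]]. simpl in Hz2.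
    destruct Hz2 as [Hz2|[]]. apply Hr in Hz2. subst. apply H2. unfold VV. rewrite in_app_iff; auto.
Qed.

Lemma fact_local : forall x, In x (avars DD) -> ~ In x VV -> th (r x) = Var (r x).
Proof. intros. apply (foot_fix _ UU); auto using hfoot, local_notU. Qed.

Lemma fact_input : forall x, In x (avars DD) -> In x VV -> tvars (th (r x)) = [].
Proof.
  intros. eapply input_ground; eauto.
  - apply Hmgu.
  - apply safety_D; auto.
Qed.

Lemma fact_Dvars : forall y, In y (avars (asubst th (asubst (ren_subst r) DD))) ->
  exists x, In x (avars DD) /\ ~ In x VV /\ y = r x.
Proof.
  intros y Hy. rewrite asubst_comp in Hy. apply avars_asubst in Hy.
  destruct Hy as [x [Hx Hy]]. simpl in Hy.
  destruct (in_dec Nat.eq_dec x VV) as [i|n].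
  - rewrite fact_input in Hy; auto. destruct Hy.
  - rewrite fact_local in Hy; auto. simpl in Hy. destruct Hy as [<-|[]]. eauto.
Qed.

Lemma fact_disj : forall K, incl (gvars K) VV ->
  disjoint (avars (asubst th (asubst (ren_subst r) DD)))
           (gvars (gsubst th (gsubst (ren_subst r) K))).
Proof.
  intros K HK y Y1 Y2. apply fact_Dvars in Y1. destruct Y1 as [x [Hx1 [Hx2 ->]]].
  rewrite gsubst_comp in Y2. apply gvars_gsubst in Y2. destruct Y2 as [z [Hz1 Hz2]].
  simpl in Hz2. destruct (foot_vars _ _ _ _ hfoot Hz2) as [E|E].
  - apply Hr in E. subst. apply Hx2. auto.
  - apply (local_notU x); auto.
Qed.

End Head.
Lemma gvars_ren : forall r K y, In y (gvars (gsubst (ren_subst r) K)) ->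
  exists z, In z (gvars K) /\ y = r z.
Proof.
  intros r K y Hy. apply gvars_gsubst in Hy. destruct Hy as [z [H1 H2]].
  simpl in H2. destruct H2 as [<-|[]]. eauto.
Qed.

Lemma avars_ren : forall r a y, In y (avars (asubst (ren_subst r) a)) ->
  exists z, In z (avars a) /\ y = r z.
Proof.
  intros r a y Hy. apply avars_asubst in Hy. destruct Hy as [z [H1 H2]].
  simpl in H2. destruct H2 as [<-|[]]. eauto.
Qed.

Lemma body2_eq : forall s G, gsubst s (G1 ++ ANeq t1 t2 :: G2 ++ G3) ++ G =
  gsubst s G1 ++ asubst s (ANeq t1 t2) :: gsubst s G2 ++ gsubst s G3 ++ G.
Proof. intros. unfold gsubst. rewrite !map_app. simpl. rewrite !map_app, <- !app_assoc. simpl. rewrite <- !app_assoc. reflexivity. Qed.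

Lemma body1_eq : forall s G, gsubst s (G1 ++ G2 ++ ANeq t1 t2 :: G3) ++ G =
  gsubst s G1 ++ gsubst s G2 ++ asubst s (ANeq t1 t2) :: gsubst s G3 ++ G.
Proof. intros. unfold gsubst. rewrite !map_app. simpl. rewrite <- !app_assoc. reflexivity. Qed.

Lemma VV_G1 : incl (gvars G1) VV.
Proof. intros x Hx. unfold VV. rewrite !in_app_iff; auto. Qed.
Lemma VV_G2 : incl (gvars G2) VV.
Proof. intros x Hx. unfold VV. rewrite !in_app_iff; auto. Qed.
Lemma VV_G3 : incl (gvars G3) VV.
Proof. intros x Hx. unfold VV. rewrite !in_app_iff; auto. Qed.
Lemma VV_h : incl (tsvars hargs) VV.
Proof. intros x Hx. unfold VV. rewrite !in_app_iff; auto. Qed.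

Lemma cv_ren_C : forall r C y, In y (clause_vars (rename_clause r C)) <->
  exists z, In z (clause_vars C) /\ y = r z.
Proof. intros. apply clause_vars_rename. Qed.

Lemma cv_ren_12 : forall r y, In y (clause_vars (rename_clause r C1)) <->
  In y (clause_vars (rename_clause r C2)).
Proof.
  intros r y. rewrite !cv_ren_C. split; intros [z [H1 H2]]; exists z; split; auto;
  [apply cv_C2; apply cv_C1 | apply cv_C1; apply cv_C2]; auto.
Qed.

Lemma ren_K_incl : forall r K, incl (gvars K) VV ->
  incl (gvars (gsubst (ren_subst r) K)) (clause_vars (rename_clause r C1)).
Proof.
  intros r K HK y Hy. apply gvars_ren in Hy. destruct Hy as [z [Hz ->]].
  apply cv_ren_C. exists z; split; auto. apply cv_C1; auto.
Qed.

Lemma ren_D_incl : forall r,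
  incl (avars (asubst (ren_subst r) DD)) (clause_vars (rename_clause r C1)).
Proof.
  intros r y Hy. apply avars_ren in Hy. destruct Hy as [z [Hz ->]].
  apply cv_ren_C. exists z; split; auto. apply cv_C1; auto.
Qed.

Section Fwd.
Hypothesis Hsatp : prog_satisfies P1 M.
Variable q : nat.
Variable ts0 : list term.
Hypothesis Hs0 : atom_sat M q ts0.

Definition okpF (a : atom) := exists u v, a = ANeq u v.
Definition oktF (a b : atom) := a = b /\ exists u v, a = ANeq u v.

Lemma okpF_sub : forall th a, okpF a -> okpF (asubst th a).
Proof. intros th a [u [v ->]]. simpl. red. eauto. Qed.

Lemma oktF_sub : forall th a b U, oktF a b -> disjoint (avars a) U -> oktF (asubst th a) (asubst th b).
Proof. intros th a b U [-> [u [v ->]]] _. split; simpl; eauto. Qed.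

Lemma oktF_incl : forall a b, oktF a b -> incl (avars a) (avars b).
Proof. intros a b [-> _]. intros x; auto. Qed.

Lemma front_fwd : forall Pre G h H1, R okpF oktF Pre G (h :: H1) -> steps P1 (h :: H1) [] ->
  exists G', steps P2 G G' /\
   ((exists G1', G' = h :: G1' /\ R okpF oktF (Pre ++ avars h) G1' H1) \/
    (okpF h /\ R okpF oktF (Pre ++ avars h) G' H1)).
Proof.
  intros Pre G h H1 HR Hs. inversion HR as [|Pre' a G0 H0 HR0|Pre' p0 G0 H0 Hp0 HR0|Pre' D D' Gm G0 H0 Hok Hdis HR0]; subst.
  - exists (h :: G0). split; [constructor|]. left. eauto.
  - exists G. split; [constructor|]. right. auto.
  - destruct Hok as [<- [u [v ->]]].
    destruct Gm as [|a Gm'].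
    + match goal with E : _ ++ _ :: _ = _ :: _ |- _ => simpl in E; injection E as <- <- end.
      assert (Hn : ~ unifiable [u] [v]).
      { apply (future_neq P1 _ _ Hs eq_refl [] u v H0); auto. intros x _ []. }
      exists G0. split.
      * apply steps_one. constructor; auto.
      * right. split; [red; eauto|]. eapply R_anti; eauto.
        intros x; rewrite !in_app_iff; tauto.
    + match goal with E : _ ++ _ :: _ = _ :: _ |- _ => simpl in E; injection E as <- <- end.
      assert (Hn : ~ unifiable [u] [v]).
      { apply (future_neq P1 _ _ Hs eq_refl (a :: Gm') u v H0); auto.
        intros x Y1 Y2. apply (Hdis x Y1). rewrite in_app_iff; auto. }
      exists (a :: Gm' ++ G0). split.
      * apply steps_one. constructor; auto.
      * left. exists (Gm' ++ G0). split; auto.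
        apply R_prepend. apply R_pend; [red; eauto|].
        eapply R_anti; eauto. intros x. simpl. rewrite !in_app_iff. tauto.
Qed.

Lemma fwd_main : forall H, steps P1 H [] -> forall G, steps P1 [APred q ts0] H ->
  R okpF oktF [] G H -> steps P2 G [].
Proof.
  intros H Hs. remember (@nil atom) as E eqn:HE.
  induction Hs as [H|H H3 H4 Hst Hs IH]; intros G Hpre HR.
  - subst. rewrite (R_nilH _ _ _ _ _ HR eq_refl). constructor.
  - destruct H as [|h H1]; [inversion Hst|].
    subst. specialize (IH eq_refl).
    destruct (front_fwd _ _ _ _ HR (steps_trans _ _ _ _ Hst Hs)) as [G' [HG' [[G1' [-> HR1]]|[Hok HR1]]]].
    + eapply steps_app; [exact HG'|].
      assert (Hincl : incl (gvars G1') (gvars H1)) by (eapply R_vars_GH; eauto using oktF_incl).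
      inversion Hst; subst.
      *
        econstructor; [constructor; eauto|].
        apply IH; [eapply steps_snoc; eauto|].
        match goal with Hm : relevant_idempotent_mgu th ?a ?b |- _ =>
          apply (R_subst okpF oktF th (tsvars a ++ tsvars b) (mgu_foot _ _ _ Hm) (okpF_sub th)
                   (fun D D' Hk Hd => oktF_sub th D D' _ Hk Hd) _ _ _ HR1) end.
        -- intros x Hx. left. simpl. unfold tsvars in Hx. simpl in Hx.
           rewrite !app_nil_r in Hx. auto.
        -- intros x [].
      *
        econstructor; [constructor; eauto|].
        apply IH; [eapply steps_snoc; eauto|]. eapply R_anti; eauto. intros x [].
      *
        rename H1 into H1'. rename G1' into G1''.
        match goal with Hm : relevant_idempotent_mgu _ _ _ |- _ => rename Hm into Hmg end.
        match goal with Hm : forall x, In x (clause_vars _) -> _ |- _ => rename Hm into Hfr end.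
        match goal with Hm : injective_ren _ |- _ => rename Hm into Hri end.
        match goal with Hm : P1 _ |- _ => rename Hm into HPC end.
        assert (Hpre' : steps P1 [APred q ts0] (gsubst th (cbody (rename_clause r C) ++ H1'))) by (eapply steps_snoc; eauto).
        destruct (classic (C = C1)) as [EC|NC].
        -- subst C. change (cpred C1) with p in *.
           change (cargs (rename_clause r C1)) with (map (tsubst (ren_subst r)) hargs) in Hmg.
           assert (Hsat : atom_sat M p ts) by (eapply Hsatp; eauto).
           assert (Hfr' : forall x, In x (clause_vars C1) -> ~ In (r x) (tsvars ts)).
           { intros x Hx Hx'. apply (Hfr (r x)). apply cv_ren_C; eauto.
             rewrite gvars_cons, in_app_iff; auto. }
           econstructor.
           { apply (step_res P2 p ts G1'' C2 r th); auto.
             - right; reflexivity.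
             - intros x Hx1 Hx2. apply (Hfr x).
               + apply cv_ren_12; auto.
               + rewrite gvars_cons, in_app_iff in *. destruct Hx2; auto. }
           apply IH; [exact Hpre'|].
           change (cbody (rename_clause r C2)) with (gsubst (ren_subst r) (G1 ++ ANeq t1 t2 :: G2 ++ G3)).
           change (cbody (rename_clause r C1)) with (gsubst (ren_subst r) (G1 ++ G2 ++ ANeq t1 t2 :: G3)).
           rewrite body2_eq, body1_eq.
           assert (Hf : foot th (tsvars ts ++ tsvars (map (tsubst (ren_subst r)) hargs))) by (apply mgu_foot; auto).
           apply (R_res_track okpF oktF th (tsvars ts ++ tsvars (map (tsubst (ren_subst r)) hargs))
                    (clause_vars (rename_clause r C1)) ([] ++ avars (APred p ts)) G1'' H1'
                    (gsubst (ren_subst r) G1) (gsubst (ren_subst r) G2) (gsubst (ren_subst r) G3)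
                    (asubst (ren_subst r) (ANeq t1 t2)) (asubst (ren_subst r) (ANeq t1 t2))
                    Hf (okpF_sub th) (fun D D' Hk Hd => oktF_sub th D D' _ Hk Hd) HR1).
           ++ intros x Y1 Y2. apply (Hfr x Y1). rewrite gvars_cons, in_app_iff; auto.
           ++ intros x Hx. rewrite in_app_iff in *. destruct Hx; auto.
              right. unfold clause_vars. rewrite in_app_iff. auto.
           ++ intros x Hx. rewrite !in_app_iff in Hx.
              destruct Hx as [Hx|[Hx|[Hx|[Hx|Hx]]]];
                first [exact (ren_K_incl r G1 VV_G1 x Hx) | exact (ren_K_incl r G2 VV_G2 x Hx)
                      | exact (ren_K_incl r G3 VV_G3 x Hx) | exact (ren_D_incl r x Hx)].
           ++ split; auto. simpl; eauto.
           ++ intros y Y1 Y2. rewrite in_app_iff in Y2. destruct Y2 as [Y2|Y2].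
              ** apply (fact_disj r ts th Hri Hfr' Hmg Hsat G1 VV_G1 y Y1 Y2).
              ** apply (fact_disj r ts th Hri Hfr' Hmg Hsat G2 VV_G2 y Y1 Y2).
        -- econstructor.
           { apply (step_res P2 (cpred C) ts G1'' C r th); auto.
             - left; auto.
             - intros x Hx1 Hx2. apply (Hfr x Hx1).
               rewrite gvars_cons, in_app_iff in *. destruct Hx2; auto. }
           apply IH; [exact Hpre'|].
           apply (R_res_simple okpF oktF th (tsvars ts ++ tsvars (cargs (rename_clause r C)))
                    (clause_vars (rename_clause r C)) ([] ++ avars (APred (cpred C) ts)) G1'' H1'
                    (cbody (rename_clause r C)) (mgu_foot _ _ _ Hmg) (okpF_sub th)
                    (fun D D' Hk Hd => oktF_sub th D D' _ Hk Hd) HR1).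
           ++ intros x Y1 Y2. apply (Hfr x Y1). rewrite gvars_cons, in_app_iff; auto.
           ++ intros x Hx. rewrite in_app_iff in *. destruct Hx; auto.
              right. unfold clause_vars. rewrite in_app_iff. auto.
           ++ intros x Hx. unfold clause_vars. rewrite in_app_iff. auto.
    + destruct Hok as [u [v ->]]. inversion Hst; subst.
      eapply steps_app; [exact HG'|]. apply IH; [eapply steps_snoc; eauto|].
      eapply R_anti; eauto. intros x [].
Qed.

End Fwd.

Section Bwd.
Hypothesis Hsatp : prog_satisfies P1 M.
Variable q : nat.
Variable ts0 : list term.
Hypothesis Hs0 : atom_sat M q ts0.
Variable B : nat.

Definition okpB (a : atom) := (exists u v, a = ANeq u v /\ ~ unifiable [u] [v]) /\
  forall x, In x (avars a) -> B <= x.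
Definition oktB (a b : atom) :=
  (exists u v s, a = ANeq u v /\ b = ANeq (tsubst s u) (tsubst s v)) /\
  forall x, In x (avars b) -> B <= x.

Lemma okpB_sub : forall th U, foot th U -> below B U ->
  forall a, okpB a -> okpB (asubst th a).
Proof.
  intros th U Hf Hb a Ha. rewrite (asubst_foot_id th U); auto.
  intros x Y1 Y2. apply (proj2 Ha) in Y1. apply Hb in Y2. lia.
Qed.

Lemma oktB_sub : forall th U, foot th U -> below B U ->
  forall a b, oktB a b -> disjoint (avars a) U -> oktB (asubst th a) (asubst th b).
Proof.
  intros th U Hf Hb a b Ha Hd. rewrite (asubst_foot_id th U a); auto.
  rewrite (asubst_foot_id th U b); auto.
  intros x Y1 Y2. apply (proj2 Ha) in Y1. apply Hb in Y2. lia.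
Qed.

Lemma front_bwd : forall Pre g Gt H, R okpB oktB Pre (g :: Gt) H ->
  exists H', steps P1 H H' /\
   ((exists H1, H' = g :: H1 /\ R okpB oktB (Pre ++ avars g) Gt H1) \/
    (exists D' Gm G0 H0, Gt = Gm ++ G0 /\ H' = Gm ++ D' :: H0 /\ oktB g D' /\
       R okpB oktB (Pre ++ gvars Gm ++ avars g ++ avars D') G0 H0)).
Proof.
  intros Pre g Gt H HR. remember (g :: Gt) as GG eqn:E. revert g Gt E.
  induction HR as [Pre|Pre a G H HR IHR|Pre p0 G H Hp0 HR IHR|Pre D D' Gm G H Hok Hdis HR IHR];
    intros g Gt E; try discriminate.
  - injection E as -> ->. exists (g :: H). split; [constructor|]. left; eauto.
  - subst. destruct (IHR g Gt eq_refl) as [H' [Hs [[H1 [-> HR1]]|[D' [Gm [G0 [H0 [-> [-> [Hok HR1]]]]]]]]]].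
    + exists (g :: H1). split.
      * destruct Hp0 as [[u [v [-> Hn]]] _]. econstructor; [constructor; eauto|]. auto.
      * left. exists H1; split; auto. eapply R_anti; eauto. intros x; rewrite !in_app_iff; tauto.
    + exists (Gm ++ D' :: H0). split.
      * destruct Hp0 as [[u [v [-> Hn]]] _]. econstructor; [constructor; eauto|]. auto.
      * right. exists D', Gm, G0, H0. split; [reflexivity|split; [reflexivity|split; [exact Hok|]]].
        eapply R_anti; eauto. intros x; rewrite !in_app_iff; tauto.
  - injection E as E1 E2; subst. exists (Gm ++ D' :: H). split; [constructor|]. right.
    exists D', Gm, G, H. split; [reflexivity|split; [reflexivity|split; [exact Hok|]]]. exact HR.
Qed.

Lemma R_nilG_steps : forall Pre G H, R okpB oktB Pre G H -> G = [] -> steps P1 H [].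
Proof.
  induction 1 as [Pre|Pre a G H HR IHR|Pre p0 G H Hp0 HR IHR|Pre D D' Gm G H Hok Hdis HR IHR];
    intros E; try discriminate.
  - constructor.
  - destruct Hp0 as [[u [v [-> Hn]]] _]. econstructor; [constructor; eauto|]. auto.
Qed.

Lemma key_t : forall r ts th N t, injective_ren r ->
  (forall x, In x (clause_vars C1) -> ~ In (r x) (tsvars ts)) ->
  relevant_idempotent_mgu th ts (map (tsubst (ren_subst r)) hargs) ->
  atom_sat M p ts ->
  (forall x, In x (tsvars ts ++ tsvars (map (tsubst (ren_subst r)) hargs)) -> x < N) ->
  incl (tvars t) (avars DD) ->
  tsubst th (tsubst (ren_subst (fun x => if in_dec Nat.eq_dec x VV then r x else N + r x)) t)
  = tsubst (fun y => Var (N + y)) (tsubst th (tsubst (ren_subst r) t)).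
Proof.
  intros r ts th N t Hr Hfr Hmg Hsat HN Ht.
  rewrite !tsubst_comp. apply tsubst_ext. intros x Hx. unfold ren_subst. cbn [tsubst].
  destruct (in_dec Nat.eq_dec x VV) as [i|n].
  - rewrite tsubst_ground; auto. eapply fact_input; eauto.
  - rewrite (fact_local r ts th Hr Hfr Hmg); auto. cbn [tsubst].
    apply (foot_fix _ _ _ (mgu_foot _ _ _ Hmg)). intros Hin. apply HN in Hin. lia.
Qed.

Lemma bwd_main : forall G G', bsteps P2 B G G' -> forall H, steps P1 [APred q ts0] H ->
  R okpB oktB [] G H -> exists H', steps P1 H H' /\ R okpB oktB [] G' H'.
Proof.
  induction 1 as [G|G G4 G5 Hst Hs IH]; intros H Hpre HR.
  - exists H; split; [constructor|auto].
  - destruct G as [|g G1t]; [inversion Hst|].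
    destruct (front_bwd _ _ _ _ HR) as [H' [HsH [[H1 [-> HR1]]|[D' [Gm [G0 [H0 [-> [-> [Hok HR1]]]]]]]]]].
    2:{ destruct Hok as [[u [v [s [-> ->]]]] HB].
        inversion Hst; subst.
        destruct (IH (Gm ++ ANeq (tsubst s u) (tsubst s v) :: H0)) as [Hq5 [Hs5 HR5]].
        - eapply steps_app; eauto.
        - apply R_prepend. apply R_pend.
          + split; auto. do 2 eexists; split; [reflexivity|]. apply nonunif_subst; auto.
          + eapply R_anti; eauto. intros x; rewrite !in_app_iff; tauto.
        - exists Hq5. split; auto. eapply steps_app; eauto. }
    assert (HvHG : forall x, In x (gvars (g :: H1)) -> In x (gvars (g :: G1t)) \/ B <= x).
    { intros x Hx. rewrite !gvars_cons, !in_app_iff in *. destruct Hx as [Hx|Hx]; auto.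
      destruct (R_vars_HG okpB oktB B (fun a Ha => proj2 Ha) (fun a b Ha => proj2 Ha) _ _ _ HR1 x Hx); auto. }
    inversion Hst; subst.
    +
      match goal with Hm : relevant_idempotent_mgu th ?a ?b |- _ => rename Hm into Hmg end.
      assert (Hf := mgu_foot _ _ _ Hmg).
      assert (HbU : below B (tsvars [t0] ++ tsvars [t3])).
      { match goal with Hb : below B (gvars _) |- _ => rename Hb into Hbg end.
        intros x Hx. apply Hbg. simpl. unfold tsvars in Hx. simpl in Hx. rewrite !app_nil_r in Hx.
        rewrite !in_app_iff in *. tauto. }
      destruct (IH (gsubst th H1)) as [Hq5 [Hs5 HR5]].
      * eapply steps_app; eauto. eapply steps_app; eauto. apply steps_one. constructor; auto.
      * apply (R_subst okpB oktB th _ Hf (okpB_sub th _ Hf HbU) (oktB_sub th _ Hf HbU) _ _ _ HR1).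
        -- intros x Hx. left. simpl. unfold tsvars in Hx. simpl in Hx. rewrite !app_nil_r in Hx. auto.
        -- intros x [].
      * exists Hq5. split; auto. eapply steps_app; eauto. econstructor; [constructor; eauto|]. auto.
    +
      destruct (IH H1) as [Hq5 [Hs5 HR5]].
      * eapply steps_app; eauto. eapply steps_app; eauto. apply steps_one. constructor; auto.
      * eapply R_anti; eauto. intros x [].
      * exists Hq5. split; auto. eapply steps_app; eauto. econstructor; [constructor; eauto|]. auto.
    +
      match goal with Hb : below B (gvars _) |- _ => rename Hb into Hbg end.
      match goal with Hb : below B (clause_vars _) |- _ => rename Hb into Hbc end.
      match goal with Hm : relevant_idempotent_mgu _ _ _ |- _ => rename Hm into Hmg end.
      match goal with Hm : forall x, In x (clause_vars _) -> _ |- _ => rename Hm into Hfr end.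
      match goal with Hm : injective_ren _ |- _ => rename Hm into Hri end.
      match goal with Hm : P2 _ |- _ => rename Hm into HPC end.
      assert (Hpre1 : steps P1 [APred q ts0] (APred (cpred C) ts :: H1)) by (eapply steps_app; eauto).
      assert (HbU : below B (tsvars ts ++ tsvars (cargs (rename_clause r C)))).
      { intros x Hx. rewrite in_app_iff in Hx. destruct Hx.
        - apply Hbg. rewrite gvars_cons, in_app_iff; auto.
        - apply Hbc. unfold clause_vars. rewrite in_app_iff; auto. }
      assert (Hf := mgu_foot _ _ _ Hmg).
      destruct HPC as [[HPC NC]|EC].
      *
        assert (Hfr1 : forall x, In x (clause_vars (rename_clause r C)) ->
                   ~ In x (gvars (APred (cpred C) ts :: H1))).
        { intros x Hx Hx'. destruct (HvHG x Hx') as [Y|Y].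
          - apply (Hfr x Hx Y).
          - apply Hbc in Hx. lia. }
        destruct (IH (gsubst th (cbody (rename_clause r C) ++ H1))) as [Hq5 [Hs5 HR5]].
        -- eapply steps_snoc; eauto. econstructor; eauto.
        -- apply (R_res_simple okpB oktB th _ (clause_vars (rename_clause r C))
                    ([] ++ avars (APred (cpred C) ts)) G1t H1 (cbody (rename_clause r C)) Hf
                    (okpB_sub th _ Hf HbU) (oktB_sub th _ Hf HbU) HR1).
           ++ intros x Y1 Y2. apply (Hfr x Y1). rewrite gvars_cons, in_app_iff; auto.
           ++ intros x Hx. rewrite in_app_iff in *. destruct Hx; auto.
              right. unfold clause_vars. rewrite in_app_iff. auto.
           ++ intros x Hx. unfold clause_vars. rewrite in_app_iff. auto.
        -- exists Hq5. split; auto. eapply steps_app; eauto. econstructor; [econstructor; eauto|]. auto.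
      *
        subst C. change (cpred C2) with p in *.
        change (cargs (rename_clause r C2)) with (map (tsubst (ren_subst r)) hargs) in Hmg, Hf, HbU.
        assert (Hsat : atom_sat M p ts) by (eapply Hsatp; eauto).
        assert (Hfr' : forall x, In x (clause_vars C1) -> ~ In (r x) (tsvars ts)).
        { intros x Hx Hx'. apply (Hfr (r x)).
          - apply cv_ren_C. exists x; split; auto. apply cv_C2, cv_C1; auto.
          - rewrite gvars_cons, in_app_iff; auto. }
        assert (HrB : forall x, In x (clause_vars C1) -> r x < B).
        { intros x Hx. apply Hbc. apply cv_ren_C. exists x; split; auto. apply cv_C2, cv_C1; auto. }
        destruct (list_bound (gvars (APred p ts :: H1))) as [bH HbH].
        set (N := B + bH).
        set (r1 := fun x => if in_dec Nat.eq_dec x VV then r x else N + r x).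
        assert (Hr1V : forall x, In x VV -> r1 x = r x).
        { intros x Hx. unfold r1. destruct (in_dec Nat.eq_dec x VV); tauto. }
        assert (Hr1N : forall x, ~ In x VV -> r1 x = N + r x).
        { intros x Hx. unfold r1. destruct (in_dec Nat.eq_dec x VV); tauto. }
        assert (HVc : forall x, In x VV -> In x (clause_vars C1)) by (intros; apply cv_C1; auto).
        assert (Hri1 : injective_ren r1).
        { intros a b E. destruct (in_dec Nat.eq_dec a VV) as [ia|na];
            destruct (in_dec Nat.eq_dec b VV) as [ib|nb].
          - rewrite !Hr1V in E; auto.
          - rewrite Hr1V, Hr1N in E; auto. specialize (HrB a (HVc a ia)). unfold N in E. lia.
          - rewrite Hr1N, Hr1V in E; auto. specialize (HrB b (HVc b ib)). unfold N in E. lia.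
          - rewrite !Hr1N in E; auto. apply Hri. lia. }
        assert (Hcargs : map (tsubst (ren_subst r1)) hargs = map (tsubst (ren_subst r)) hargs).
        { apply tsmap_ext. intros x Hx. unfold ren_subst. rewrite Hr1V; auto. apply VV_h; auto. }
        assert (HGi : forall K, incl (gvars K) VV -> gsubst (ren_subst r1) K = gsubst (ren_subst r) K).
        { intros K HK. apply gsubst_ext. intros x Hx. unfold ren_subst. rewrite Hr1V; auto. }
        assert (Hr1cv : forall y, In y (clause_vars (rename_clause r1 C1)) ->
                   In y (clause_vars (rename_clause r C2)) \/ N <= y).
        { intros y Hy. apply cv_ren_C in Hy. destruct Hy as [z [Hz ->]].
          destruct (in_dec Nat.eq_dec z VV) as [i|n].
          - left. rewrite Hr1V; auto. apply cv_ren_C. exists z; split; auto. apply cv_C2, cv_C1; auto.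
          - right. rewrite Hr1N; auto. lia. }
        assert (Hfr1 : forall x, In x (clause_vars (rename_clause r1 C1)) ->
                   ~ In x (gvars (APred p ts :: H1))).
        { intros x Hx Hx'. destruct (Hr1cv x Hx) as [Y|Y].
          - destruct (HvHG x Hx') as [Y'|Y'].
            + apply (Hfr x Y Y').
            + apply Hbc in Y. lia.
          - apply HbH in Hx'. unfold N in Y. lia. }
        assert (Hstep1 : step P1 (APred p ts :: H1)
                   (gsubst th (cbody (rename_clause r1 C1) ++ H1))).
        { apply step_res; auto. change (cargs (rename_clause r1 C1)) with (map (tsubst (ren_subst r1)) hargs).
          rewrite Hcargs. auto. }
        destruct (IH (gsubst th (cbody (rename_clause r1 C1) ++ H1))) as [Hq5 [Hs5 HR5]].
        -- eapply steps_snoc; eauto.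
        -- change (cbody (rename_clause r C2)) with (gsubst (ren_subst r) (G1 ++ ANeq t1 t2 :: G2 ++ G3)).
           change (cbody (rename_clause r1 C1)) with (gsubst (ren_subst r1) (G1 ++ G2 ++ ANeq t1 t2 :: G3)).
           rewrite body2_eq, body1_eq. rewrite (HGi G1 VV_G1), (HGi G2 VV_G2), (HGi G3 VV_G3).
           assert (Hkey : forall t, incl (tvars t) (avars DD) ->
                     tsubst th (tsubst (ren_subst r1) t)
                     = tsubst (fun y => Var (N + y)) (tsubst th (tsubst (ren_subst r) t))).
           { intros t Ht. apply (key_t r ts th N t Hri Hfr' Hmg Hsat); auto.
             intros x Hx. apply HbU in Hx. unfold N. lia. }
           apply (R_res_track okpB oktB th (tsvars ts ++ tsvars (map (tsubst (ren_subst r)) hargs))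
                    (clause_vars (rename_clause r C2) ++ clause_vars (rename_clause r1 C1))
                    ([] ++ avars (APred p ts)) G1t H1
                    (gsubst (ren_subst r) G1) (gsubst (ren_subst r) G2) (gsubst (ren_subst r) G3)
                    (asubst (ren_subst r) (ANeq t1 t2)) (asubst (ren_subst r1) (ANeq t1 t2))
                    Hf (okpB_sub th _ Hf HbU) (oktB_sub th _ Hf HbU) HR1).
           ++ intros x Y1 Y2. rewrite in_app_iff in Y1. destruct Y1 as [Y1|Y1].
              ** apply (Hfr x Y1). rewrite gvars_cons, in_app_iff; auto.
              ** destruct (Hr1cv x Y1) as [Y|Y].
                 --- apply (Hfr x Y). rewrite gvars_cons, in_app_iff; auto.
                 --- assert (x < B) by (apply Hbg; rewrite gvars_cons, in_app_iff; auto).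
                     unfold N in Y. lia.
           ++ intros x Hx. rewrite !in_app_iff in *. destruct Hx; auto.
              right. left. unfold clause_vars. rewrite in_app_iff. auto.
           ++ intros x Hx. rewrite !in_app_iff in Hx. rewrite in_app_iff.
              destruct Hx as [Hx|[Hx|[Hx|[Hx|Hx]]]]; [left; apply cv_ren_12..|right].
              ** exact (ren_K_incl r G1 VV_G1 x Hx).
              ** exact (ren_K_incl r G2 VV_G2 x Hx).
              ** exact (ren_K_incl r G3 VV_G3 x Hx).
              ** exact (ren_D_incl r x Hx).
              ** exact (ren_D_incl r1 x Hx).
           ++ assert (E : asubst th (asubst (ren_subst r1) (ANeq t1 t2)) =
                      ANeq (tsubst (fun y => Var (N + y)) (tsubst th (tsubst (ren_subst r) t1)))
                           (tsubst (fun y => Var (N + y)) (tsubst th (tsubst (ren_subst r) t2)))).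
              { cbn [asubst]. rewrite !Hkey; auto.
                - intros x Hx. unfold DD. simpl. rewrite in_app_iff; auto.
                - intros x Hx. unfold DD. simpl. rewrite in_app_iff; auto. }
              rewrite E. split.
              ** do 3 eexists. split; [reflexivity|reflexivity].
              ** intros x Hx. simpl in Hx. rewrite in_app_iff in Hx.
                 destruct Hx as [Hx|Hx]; apply tvars_tsubst in Hx; destruct Hx as [z [_ Hz]];
                   simpl in Hz; destruct Hz as [<-|[]]; unfold N; lia.
           ++ intros y Y1 Y2. rewrite in_app_iff in Y2. destruct Y2 as [Y2|Y2].
              ** apply (fact_disj r ts th Hri Hfr' Hmg Hsat G1 VV_G1 y Y1 Y2).
              ** apply (fact_disj r ts th Hri Hfr' Hmg Hsat G2 VV_G2 y Y1 Y2).
        -- exists Hq5. split; auto. eapply steps_app; eauto. econstructor; [exact Hstep1|]. auto.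
Qed.

End Bwd.

End Main.

Lemma in_gvars : forall x G, In x (gvars G) <-> exists a, In a G /\ In x (avars a).
Proof. intros. unfold gvars. rewrite in_flat_map. firstorder. Qed.

Lemma safe_perm : forall M C C', cpred C = cpred C' -> cargs C = cargs C' ->
  Permutation (cbody C) (cbody C') -> clause_safe M C -> clause_safe M C'.
Proof.
  intros M C C' Ep Ea Hp Hs Ga a b Gb Hb x Hx.
  assert (Hin : In (ANeq a b) (cbody C)).
  { apply (Permutation_in _ (Permutation_sym Hp)). rewrite Hb. apply in_app_iff. right; left; auto. }
  apply in_split in Hin. destruct Hin as [Ga' [Gb' E]].
  assert (Hp2 : Permutation (Ga' ++ Gb') (Ga ++ Gb)).
  { apply Permutation_app_inv with (a := ANeq a b). rewrite <- E, <- Hb. auto. }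
  destruct (Hs Ga' a b Gb' E x Hx) as [Hi|Hn].
  - left. rewrite Ep, Ea in Hi. exact Hi.
  - right. intro Hc. apply Hn. rewrite <- Ea in Hc. rewrite !in_app_iff in *.
    destruct Hc as [Hc|Hc]; auto. right.
    rewrite <- !in_app_iff, <- gvars_app in *. apply in_gvars in Hc. apply in_gvars.
    destruct Hc as [c [Hc1 Hc2]]. exists c. split; auto.
    apply (Permutation_in _ (Permutation_sym Hp2)). auto.
Qed.

Theorem proposition1 :
  forall (M : mode) (P1 : program) (p : nat) (hargs : list term)
         (G1 G2 G3 : goal) (t1 t2 : term),
    is_mode_for M P1 ->
    prog_safe M P1 ->
    prog_satisfies P1 M ->
    P1 (mkClause p hargs (G1 ++ G2 ++ ANeq t1 t2 :: G3)) ->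
    let P2 := replace_clause P1 (mkClause p hargs (G1 ++ G2 ++ ANeq t1 t2 :: G3))
                                (mkClause p hargs (G1 ++ ANeq t1 t2 :: G2 ++ G3)) in
    prog_safe M P2 /\
    prog_satisfies P2 M /\
    (forall q ts, atom_sat M q ts ->
       (succeeds P1 [APred q ts] <-> succeeds P2 [APred q ts])).
Proof.
  intros M P1 p hargs G1 G2 G3 t1 t2 _ Hsafe Hsat HC1 P2'.
  change P2' with (P2 P1 p hargs G1 G2 G3 t1 t2). clear P2'.
  split; [|split].
  - intros C [[HC _]| ->]; auto.
    apply (safe_perm M (C1 p hargs G1 G2 G3 t1 t2)); auto.
    simpl. apply Permutation_app_head. apply Permutation_sym, Permutation_middle.
  - intros q ts Hq p' ts' G Hst.
    destruct (steps_bsteps _ _ _ Hst) as [B HB].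
    assert (HR0 : R (okpB B) (oktB B) [] [APred q ts] [APred q ts]) by (repeat constructor).
    destruct (bwd_main M P1 p hargs G1 G2 G3 t1 t2 Hsafe HC1 Hsat q ts Hq B _ _ HB [APred q ts] (steps_refl _ _) HR0)
      as [H' [HsH HR]].
    destruct (front_bwd P1 B _ _ _ _ HR) as [H'' [HsH' [[H1 [-> _]]|[D' [Gm [G0 [H0 [_ [_ [[[u [v [s [E _]]]] _] _]]]]]]]]]].
    + eapply Hsat; eauto. eapply steps_app; eauto.
    + discriminate.
  - intros q ts Hq. split; intros Hs.
    + apply (fwd_main M P1 p hargs G1 G2 G3 t1 t2 Hsafe HC1 Hsat q ts Hq [APred q ts] Hs); [constructor|].
      repeat constructor.
    + destruct (steps_bsteps _ _ _ Hs) as [B HB].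
      assert (HR0 : R (okpB B) (oktB B) [] [APred q ts] [APred q ts]) by (repeat constructor).
      destruct (bwd_main M P1 p hargs G1 G2 G3 t1 t2 Hsafe HC1 Hsat q ts Hq B _ _ HB [APred q ts] (steps_refl _ _) HR0)
        as [H' [HsH HR]].
      eapply steps_app; eauto. eapply (R_nilG_steps P1 B); eauto.
Qed.
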